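(* Let $K\ge 1$, let $V=V_1\sqcup\cdots\sqcup V_K$ be a finite vertex set with $|V_i|=n_i$, let $b:V\to\{1,\dots,K\}$ be the block membership function ($b(v)=i$ iff $v\in V_i$), and let $\Lambda\in(0,1)^{K\times K}$ be a symmetric matrix. Let $V=S\sqcup A$ (seeds $S$, ambiguous vertices $A$), with $m_i=|S\cap V_i|$, $m=\sum_i m_i$, $n=\sum_i n_i$, and assume $n_1-m_1\ge 1$. Then for every vertex nomination scheme $\mathcal{L}$ (in the sense defined in the context), the canonical vertex nomination scheme $\mathcal{L}^C$ satisfies $$MAP(\mathcal{L}^C)\ \ge\ MAP(\mathcal{L}),$$ where both mean average precisions are computed with respect to $\mathbf{G}\sim \mathrm{SBM}(K,\vec n,b,\Lambda)$.
   Context: SBM: A random graph $\mathbf{G}$ on $V$ is $\mathrm{SBM}(K,\vec n,b,\Lambda)$ if, for each unordered pair $\{u,v\}$ of distinct vertices, the edge $u\sim v$ is present independently with probability $\Lambda_{b(u),b(v)}$. Vertex nomination scheme: Let $\mathcal{G}$ be the set of all (simple, undirected) graphs on vertex set $V=S\sqcup A$, and suppose $S$, $A$ and the restriction $b|_S$ are given. A vertex nomination scheme is a function $\mathcal{L}$ assigning to each $G\in\mathcal{G}$ an ordering $(\mathcal{L}_{G,1},\dots,\mathcal{L}_{G,n-m})$ of $A$ (the nomination list), subject to: (i) every graph with a nontrivial automorphism is assigned the empty nomination list; (ii) for any asymmetric $G,H\in\mathcal{G}$ and any isomorphism $\gamma:G\to H$ that is the identity on $S$, $\gamma(\mathcal{L}_{G,i})=\mathcal{L}_{H,i}$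 for all $i$. Mean average precision: $MAP(\mathcal{L})=\mathbb{E}\Big(\frac{1}{n_1-m_1}\sum_{j=1}^{n_1-m_1}\frac{|\{i:1\le i\le j,\ b(\mathcal{L}_{\mathbf{G},i})=1\}|}{j}\Big)$, the expectation over $\mathbf{G}\sim\mathrm{SBM}(K,\vec n,b,\Lambda)$ (positions absent from an empty list contribute nothing). Canonical scheme: Let $\Phi$ be the set of functions $\varphi:V\to\{1,\dots,K\}$ with $\varphi(v)=b(v)$ for all $v\in S$ and $|\{v:\varphi(v)=i\}|=n_i$ for all $i$. For $G\in\mathcal{G}$ and $\varphi\in\Phi$, let $e^{G,\varphi}_{i,j}$ be the number of edges of $G$ with one endpoint mapped by $\varphi$ to $i$ and the other to $j$, and $c^{G,\varphi}_{i,j}=n_in_j-e^{G,\varphi}_{i,j}$ for $i\ne j$, $c^{G,\varphi}_{i,i}=\binom{n_i}{2}-e^{G,\varphi}_{i,i}$. Define for $v\in A$ $$\mathbb{Q}(\phi(v)=1\mid G)=\frac{\sum_{\varphi\in\Phi:\varphi(v)=1}\prod_{i=1}^K\prod_{j=i}^K\Lambda_{i,j}^{e^{G,\varphi}_{i,j}}(1-\Lambda_{i,j})^{c^{G,\varphi}_{i,j}}}{\sum_{\varphi\in\Phi}\prod_{i=1}^K\prod_{j=i}^K\Lambda_{i,j}^{e^{G,\varphi}_{i,j}}(1-\Lambda_{i,j})^{c^{G,\varphi}_{i,j}}},$$ i.e. the posterior probability that $v$ is in block 1 when $\varphi$ is drawn uniformly from $\Phi$ and then $G\sim\mathrm{SBM}(K,\vec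 n,\varphi,\Lambda)$. The canonical scheme $\mathcal{L}^C$ is the vertex nomination scheme which (for asymmetric $G$) lists the vertices of $A$ in nonincreasing order of $\mathbb{Q}(\phi(v)=1\mid G)$, ties broken arbitrarily. *)

(* Defs.v *)
From mathcomp Require Import all_boot all_order all_algebra all_fingroup.
Set Implicit Arguments. Unset Strict Implicit. Unset Printing Implicit Defensive.
Import Order.TTheory GRing.Theory Num.Theory.
Local Open Scope ring_scope.

Section SBM.
Variables (R : realFieldType) (V : finType) (K : nat).

Definition is_graph (G : {set {set V}}) : bool :=
  [forall e in G, #|e| == 2%N].

(* Probability of the graph G under SBM(K, n, phi, Lambda): independent edges
   over unordered pairs {u,v} (enumerated as enum_rank u < enum_rank v). *)
Definition sbm_prob (phi : V -> 'I_K) (Lam : 'M[R]_K) (G : {set {set V}}) : R :=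
  \prod_(u : V) \prod_(v : V | (enum_rank u < enum_rank v)%N)
     (if [set u; v] \in G then Lam (phi u) (phi v) else 1 - Lam (phi u) (phi v)).

Definition bsize (b : V -> 'I_K) (i : 'I_K) : nat := #|[set v | b v == i]|.

Definition is_iso (g : {perm V}) (G H : {set {set V}}) : bool :=
  [forall e : {set V}, (e \in G) == ((g @: e) \in H)].

Definition asymmetric (G : {set {set V}}) : bool :=
  [forall g : {perm V}, is_iso g G G ==> (g == 1%g)].

(* Vertex nomination scheme, with A = ~: S. *)
Definition is_VN_scheme (S : {set V}) (L : {set {set V}} -> seq V) : Prop :=
  (forall G, is_graph G -> ~~ asymmetric G -> L G = [::]) /\
  (forall G, is_graph G -> asymmetric G -> perm_eq (L G) (enum (~: S))) /\
  (forall G H (g : {perm V}), is_graph G -> is_graph H ->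
     asymmetric G -> asymmetric H -> is_iso g G H ->
     (forall s, s \in S -> g s = s) ->
     map g (L G) = L H).

Definition MAP (b : V -> 'I_K) (blk1 : 'I_K) (Lam : 'M[R]_K) (S : {set V})
    (L : {set {set V}} -> seq V) : R :=
  let N := (bsize b blk1 - #|S :&: [set v | b v == blk1]|)%N in
  \sum_(G : {set {set V}} | is_graph G)
     sbm_prob b Lam G *
     (N%:R^-1 * \sum_(1 <= j < N.+1)
        (count (fun v => b v == blk1) (take j (L G)))%:R / j%:R).

Definition admissible (b : V -> 'I_K) (S : {set V}) (phi : {ffun V -> 'I_K}) : bool :=
  [forall s in S, phi s == b s] && [forall i, #|[set v | phi v == i]| == bsize b i].

Definition ecount (G : {set {set V}}) (phi : {ffun V -> 'I_K}) (i j : 'I_K) : nat :=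
  #|[set e in G | [exists u, exists v,
        [&& e == [set u; v], u != v, phi u == i & phi v == j]]]|.

Definition ccount (b : V -> 'I_K) (G : {set {set V}}) (phi : {ffun V -> 'I_K})
    (i j : 'I_K) : nat :=
  if i == j then ('C(bsize b i, 2) - ecount G phi i j)%N
  else (bsize b i * bsize b j - ecount G phi i j)%N.

Definition lik (b : V -> 'I_K) (Lam : 'M[R]_K) (G : {set {set V}})
    (phi : {ffun V -> 'I_K}) : R :=
  \prod_(i < K) \prod_(j < K | (i <= j)%N)
     (Lam i j ^+ ecount G phi i j * (1 - Lam i j) ^+ ccount b G phi i j).

Definition Qpost (b : V -> 'I_K) (blk1 : 'I_K) (Lam : 'M[R]_K) (S : {set V})
    (G : {set {set V}}) (v : V) : R :=
  (\sum_(phi | admissible b S phi && (phi v == blk1)) lik b Lam G phi) /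
  (\sum_(phi | admissible b S phi) lik b Lam G phi).

Definition is_canonical_scheme (b : V -> 'I_K) (blk1 : 'I_K) (Lam : 'M[R]_K)
    (S : {set V}) (L : {set {set V}} -> seq V) : Prop :=
  is_VN_scheme S L /\
  (forall G, is_graph G -> asymmetric G ->
     sorted (fun u v => Qpost b blk1 Lam S G v <= Qpost b blk1 Lam S G u) (L G)).

End SBM.

(* Main.v *)
Require Import Defs.
From mathcomp Require Import all_boot all_order all_algebra all_fingroup.
Import Order.TTheory GRing.Theory Num.Theory.
Set Implicit Arguments. Unset Strict Implicit. Unset Printing Implicit Defensive.
Local Open Scope ring_scope.

Lemma perm_of_fibers (V : finType) (T : eqType) (f g : V -> T) :
  (forall t, #|[set x | f x == t]| = #|[set x | g x == t]|) ->
  exists s : {perm V}, forall x, g (s x) = f x.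
Proof.
move=> Hc.
pose F x := enum [set y | f y == f x].
pose G x := enum [set y | g y == f x].
pose h x := nth x (G x) (index x (F x)).
have HF x : x \in F x by rewrite mem_enum inE.
have Hlt x : (index x (F x) < size (G x))%N.
  by rewrite /G -cardE -Hc cardE index_mem.
have Hg x : g (h x) = f x.
  by have := mem_nth x (Hlt x); rewrite mem_enum inE => /eqP.
have hinj : injective h.
  move=> x y hxy.
  have fxy : f x = f y by rewrite -Hg hxy Hg.
  have lx := Hlt x; have ly := Hlt y.
  have Fx := HF x; have Fy := HF y.
  rewrite /h /G /F fxy in hxy lx ly Fx Fy *.
  rewrite (set_nth_default y) // in hxy.
  move/eqP: hxy; rewrite nth_uniq ?enum_uniq // => /eqP ixy.
  by rewrite -(nth_index y Fx) ixy nth_index.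
by exists (perm hinj) => x; rewrite permE.
Qed.

Lemma perm_fix (V : finType) (K : nat) (S : {set V}) (b : V -> 'I_K)
  (phi : {ffun V -> 'I_K}) : admissible b S phi ->
  exists s : {perm V}, (forall x, x \in S -> s x = x) /\ forall x, b (s x) = phi x.
Proof.
case/andP => /forall_inP HS /forallP Hsz.
pose f x : (V + 'I_K)%type := if x \in S then inl x else inr (phi x).
pose g x : (V + 'I_K)%type := if x \in S then inl x else inr (b x).
have [s Hs] : exists s : {perm V}, forall x, g (s x) = f x.
  apply: perm_of_fibers => -[t|i].
    by apply: eq_card => x; rewrite !inE /f /g; case: ifP.
  have -> : [set x | f x == inr i] = [set x | phi x == i] :\: S.
    apply/setP => x; rewrite !inE /f; by case: ifP.
  have -> : [set x | g x == inr i] = [set x | b x == i] :\: S.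
    apply/setP => x; rewrite !inE /g; by case: ifP.
  have E : [set x | phi x == i] :&: S = [set x | b x == i] :&: S.
    apply/setP => x; rewrite !inE; case xS: (x \in S); rewrite ?andbF ?andbT //.
    by rewrite (eqP (HS x xS)).
  have := cardsID S [set x | phi x == i]; have := cardsID S [set x | b x == i].
  rewrite E (eqP (Hsz i)) /bsize => <-; exact: addnI.
have fixS x : x \in S -> s x = x.
  move=> xS; have := Hs x; rewrite /f /g xS; by case: ifP => // _ [].
exists s; split => // x.
case xS: (x \in S).
  by rewrite fixS // (eqP (HS x xS)).
have := Hs x; rewrite /f /g xS; by case: ifP => // _ [].
Qed.


Lemma topA (T : eqType) (R : realFieldType) (q : T -> R) (t : seq T) (x : T) (k : nat) :
  x \in t -> (forall y, y \in t -> q y <= q x) ->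
  \sum_(v <- take k.+1 t) q v <= q x + \sum_(v <- take k (rem x t)) q v.
Proof.
elim: t k => [|y t IH] k //= xt Hm.
case: eqP => [<-|/eqP yx].
  by rewrite big_cons.
rewrite big_cons.
case: k => [|k].
  by rewrite take0 !big_nil !addr0 Hm // mem_head.
rewrite /= big_cons.
have xt' : x \in t by move: xt; rewrite in_cons eq_sym (negbTE yx).
have := IH k xt' (fun z zt => Hm z (@mem_behead _ (y :: t) z zt)).
move=> H; rewrite addrCA; apply: lerD => //.
Qed.

Lemma topB (T : eqType) (R : realFieldType) (q : T -> R) (s t : seq T) :
  sorted (fun u v => q v <= q u) s -> perm_eq t s ->
  forall j, \sum_(v <- take j t) q v <= \sum_(v <- take j s) q v.
Proof.
elim: s t => [|x s IH] t Hs Hp j.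
  by rewrite (perm_small_eq _ Hp).
case: j => [|k]; first by rewrite !take0 !big_nil.
have xt : x \in t by rewrite (perm_mem Hp) mem_head.
have tr : transitive (fun u v => q v <= q u).
  by move=> a c d h1 h2; exact: le_trans h2 h1.
have Hall := order_path_min tr Hs.
have Hm : forall y, y \in t -> q y <= q x.
  move=> y; rewrite (perm_mem Hp) in_cons => /orP [/eqP -> //|ys].
  by move/allP: Hall => /(_ y ys).
apply: le_trans (topA k xt Hm) _.
rewrite /= big_cons lerD2l.
apply: IH; first exact: path_sorted Hs.
have := perm_to_rem xt; rewrite perm_sym => H1.
by rewrite -(perm_cons x); apply: perm_trans H1 Hp.
Qed.


Definition gmap (V : finType) (s : {perm V}) (G : {set {set V}}) : {set {set V}} :=
  (fun e : {set V} => [set s x | x in e]) @: G.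

Lemma psetM (V : finType) (s t : {perm V}) (e : {set V}) :
  [set (s * t)%g x | x in e] = [set t x | x in [set s x | x in e]].
Proof. by rewrite -imset_comp; apply: eq_imset => x; rewrite permM. Qed.

Lemma pset1 (V : finType) (e : {set V}) : [set (1%g : {perm V}) x | x in e] = e.
Proof.
by rewrite (eq_imset (g := id)) ?imset_id // => x; rewrite perm1.
Qed.

Lemma psetK (V : finType) (s : {perm V}) (e : {set V}) :
  [set s x | x in [set s^-1%g x | x in e]] = e.
Proof. by rewrite -psetM mulVg pset1. Qed.

Lemma psetKV (V : finType) (s : {perm V}) (e : {set V}) :
  [set s^-1%g x | x in [set s x | x in e]] = e.
Proof. by rewrite -psetM mulgV pset1. Qed.

Lemma pset_inj (V : finType) (s : {perm V}) : injective (fun e : {set V} => [set s x | x in e]).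
Proof. exact: imset_inj (@perm_inj _ s). Qed.

Lemma gmap_mem (V : finType) (s : {perm V}) G (e : {set V}) :
  ([set s x | x in e] \in gmap s G) = (e \in G).
Proof. by rewrite /gmap mem_imset //; apply: pset_inj. Qed.

Lemma gmap_inj (V : finType) (s : {perm V}) : injective (gmap s).
Proof. exact: imset_inj (@pset_inj V s). Qed.

Lemma gmapM (V : finType) (s t : {perm V}) G : gmap (s * t)%g G = gmap t (gmap s G).
Proof.
rewrite /gmap -imset_comp; apply: eq_imset => e; by rewrite /= psetM.
Qed.

Lemma gmapKV (V : finType) (s : {perm V}) G : gmap s^-1%g (gmap s G) = G.
Proof.
rewrite -gmapM mulgV /gmap (eq_imset (g := id)) ?imset_id // => e; exact: pset1.
Qed.

Lemma graph_gmap (V : finType) (s : {perm V}) G : is_graph G -> is_graph (gmap s G).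
Proof.
move=> /forall_inP HG; apply/forall_inP => e /imsetP [e' He' ->].
by rewrite card_imset //; [apply: HG | apply: perm_inj].
Qed.

Lemma graph_gmapE (V : finType) (s : {perm V}) G : is_graph (gmap s G) = is_graph G.
Proof.
apply/idP/idP; last exact: graph_gmap.
by move/(graph_gmap s^-1%g); rewrite gmapKV.
Qed.

Lemma iso_gmap (V : finType) (s : {perm V}) G : is_iso s G (gmap s G).
Proof. by apply/forallP => e; rewrite gmap_mem. Qed.

Lemma asym_gmap (V : finType) (s : {perm V}) G : asymmetric G -> asymmetric (gmap s G).
Proof.
move=> /forallP HG; apply/forallP => g; apply/implyP => /forallP Hg.
have Hiso : is_iso (s * g * s^-1)%g G G.
  apply/forallP => e.
  rewrite !psetM.
  have E1 := gmap_mem s G e.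
  have E2 := gmap_mem s G [set s^-1%g x | x in [set g x | x in [set s x | x in e]]].
  rewrite psetK in E2.
  by rewrite -E1 -E2 (eqP (Hg _)).
have := implyP (HG _) Hiso => /eqP H.
apply/eqP; apply: (mulgI s); rewrite mulg1.
by rewrite -[RHS]mul1g -H -mulgA mulVg mulg1.
Qed.

Lemma asym_gmapE (V : finType) (s : {perm V}) G : asymmetric (gmap s G) = asymmetric G.
Proof.
apply/idP/idP; last exact: asym_gmap.
by move/(asym_gmap s^-1%g); rewrite gmapKV.
Qed.


Lemma ecount_gmap (V : finType) (K : nat) (s : {perm V}) (G : {set {set V}})
  (phi : {ffun V -> 'I_K}) i j :
  ecount G [ffun x => phi (s x)] i j = ecount (gmap s G) phi i j.
Proof.
rewrite /ecount -[RHS](card_preimset _ (@pset_inj V s)).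
apply: eq_card => e; rewrite !inE gmap_mem; congr (_ && _).
apply/existsP/existsP.
  case=> x /existsP [y /and4P [/eqP -> xy fx fy]].
  exists (s x); apply/existsP; exists (s y).
  rewrite imsetU1 imset_set1 eqxx (inj_eq (@perm_inj _ s)) xy.
  by rewrite !ffunE in fx fy; rewrite fx fy.
case=> x /existsP [y /and4P [/eqP E xy fx fy]].
exists (s^-1%g x); apply/existsP; exists (s^-1%g y).
rewrite (inj_eq (@perm_inj _ _)) xy !ffunE !permKV fx fy !andbT.
apply/eqP; apply: (@pset_inj V s); rewrite E imsetU1 imset_set1 !permKV //.
Qed.

Lemma lik_gmap (V : finType) (K : nat) (R : realFieldType) (b : V -> 'I_K)
  (Lam : 'M[R]_K) (s : {perm V}) (G : {set {set V}}) (phi : {ffun V -> 'I_K}) :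
  lik b Lam G [ffun x => phi (s x)] = lik b Lam (gmap s G) phi.
Proof.
rewrite /lik /ccount; apply: eq_bigr => i _; apply: eq_bigr => j _.
by rewrite !ecount_gmap.
Qed.


Lemma set2_eq (V : finType) (x y u v : V) : u != v -> [set x; y] = [set u; v] ->
  (x = u /\ y = v) \/ (x = v /\ y = u).
Proof.
move=> uv E.
have xin : x \in [set u; v] by rewrite -E set21.
have yin : y \in [set u; v] by rewrite -E set22.
have uin : u \in [set x; y] by rewrite E set21.
have vin : v \in [set x; y] by rewrite E set22.
move: xin; rewrite in_set2 => /orP [/eqP xu | /eqP xv].
  left; split => //; move: vin; rewrite in_set2 => /orP [/eqP vx|/eqP vy] //.
  by move: uv; rewrite vx xu eqxx.
right; split => //; move: uin; rewrite in_set2 => /orP [/eqP ux|/eqP uy] //.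
by move: uv; rewrite ux xv eqxx.
Qed.

Lemma ecountU1 (V : finType) (K : nat) (H : {set {set V}}) (phi : {ffun V -> 'I_K})
  (e : {set V}) i j : e \notin H ->
  ecount (e |: H) phi i j =
  (([exists u, exists v, [&& e == [set u; v], u != v, phi u == i & phi v == j]] : nat)
  + ecount H phi i j)%N.
Proof.
move=> eH; rewrite /ecount.
case: (boolP [exists u, exists v, [&& e == [set u; v], u != v, phi u == i & phi v == j]]) => Pe.
  rewrite (_ : [set _ in _ | _] = e |: [set e' in H | [exists u, exists v,
        [&& e' == [set u; v], u != v, phi u == i & phi v == j]]]).
    by rewrite cardsU1 inE (negbTE eH).
  by apply/setP => e'; rewrite !inE; case: eqP => [->|] //; rewrite Pe.
rewrite add0n; apply: eq_card => e'; rewrite !inE; case: eqP => [->|] //.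
by rewrite (negbTE eH) (negbTE Pe).
Qed.

Lemma ecount_bound (V : finType) (K : nat) (H : {set {set V}}) (phi : {ffun V -> 'I_K}) i j :
  (ecount H phi i j <= (if i == j then 'C(#|[set v | phi v == i]|, 2)
      else #|[set v | phi v == i]| * #|[set v | phi v == j]|))%N.
Proof.
rewrite /ecount; case: eqP => [<-|ij].
  rewrite -cards_draws; apply: subset_leq_card; apply/subsetP => e.
  rewrite !inE => /andP [_ /existsP [x /existsP [y /and4P [/eqP -> xy fx fy]]]].
  rewrite cards2 xy andbT; apply/subsetP => z; rewrite !inE.
  by case/orP => /eqP ->.
rewrite -cardsX.
apply: leq_trans (leq_imset_card (fun p : V * V => [set p.1; p.2]) _).
apply: subset_leq_card; apply/subsetP => e.
rewrite inE => /andP [_ /existsP [x /existsP [y /and4P [/eqP -> xy fx fy]]]].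
by apply/imsetP; exists (x, y) => //; rewrite inE /= !inE fx fy.
Qed.

Lemma prod2_step (T : finType) (R : comPzRingType) (P : T -> T -> bool)
  (F1 F2 : T -> T -> R) u v c1 c2 :
  P u v -> (forall x y, P x y -> (x, y) != (u, v) -> F1 x y = F2 x y) ->
  F1 u v * c2 = F2 u v * c1 ->
  (\prod_x \prod_(y | P x y) F1 x y) * c2 = (\prod_x \prod_(y | P x y) F2 x y) * c1.
Proof.
move=> Puv HF Huv.
have L1 : forall F : T -> T -> R, \prod_x \prod_(y | P x y) F x y =
   F u v * ((\prod_(y | P u y && (y != v)) F u y) * \prod_(x | x != u) \prod_(y | P x y) F x y).
  by move=> F; rewrite (bigD1 u) //= (bigD1 v) //= mulrA.
rewrite !L1.
have -> : \prod_(y | P u y && (y != v)) F1 u y = \prod_(y | P u y && (y != v)) F2 u y.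
  apply: eq_bigr => y /andP [Puy yv]; apply: HF => //.
  by rewrite xpair_eqE negb_and yv orbT.
have -> : \prod_(x | x != u) \prod_(y | P x y) F1 x y = \prod_(x | x != u) \prod_(y | P x y) F2 x y.
  apply: eq_bigr => x xu; apply: eq_bigr => y Pxy; apply: HF => //.
  by rewrite xpair_eqE negb_and xu.
by rewrite mulrAC Huv mulrAC.
Qed.


Lemma P_step (V : finType) (K : nat) (R : realFieldType) (b : V -> 'I_K) (Lam : 'M[R]_K)
  (Lsym : forall i j, Lam i j = Lam j i) (H : {set {set V}}) (u v : V) :
  u != v -> [set u; v] \notin H ->
  sbm_prob b Lam ([set u; v] |: H) * (1 - Lam (b u) (b v)) = sbm_prob b Lam H * Lam (b u) (b v).
Proof.
move=> uv.
wlog ruv : u v uv / (enum_rank u < enum_rank v)%N.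
  move=> W; case: (ltngtP (enum_rank u) (enum_rank v)) => r.
  - exact: W.
  - rewrite (setUC [set u]) Lsym; apply: W => //; by rewrite eq_sym.
  - by move: uv; rewrite (enum_rank_inj (ord_inj r)) eqxx.
move=> nH; rewrite /sbm_prob; apply: (prod2_step (u:=u) (v:=v)) => //.
- move=> x y rxy; rewrite xpair_eqE negb_and => Hne.
  rewrite in_setU1.
  case: eqP => [E|] //=.
  case: (set2_eq uv E) => [[xu yv]|[xv yu]].
    by move: Hne; rewrite xu yv !eqxx.
  by move: rxy; rewrite xv yu ltnNge ltnW.
- by rewrite setU11 (negbTE nH) mulrC.
Qed.

Lemma lik_step (V : finType) (K : nat) (R : realFieldType) (b : V -> 'I_K) (Lam : 'M[R]_K)
  (Lsym : forall i j, Lam i j = Lam j i) (H : {set {set V}}) (u v : V) :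
  u != v -> [set u; v] \notin H ->
  lik b Lam ([set u; v] |: H) [ffun x => b x] * (1 - Lam (b u) (b v)) =
  lik b Lam H [ffun x => b x] * Lam (b u) (b v).
Proof.
move=> uv.
wlog buv : u v uv / (b u <= b v)%N.
  move=> W; case: (leqP (b u) (b v)) => r; first exact: W.
  rewrite (setUC [set u]) Lsym; apply: W; [by rewrite eq_sym | exact: ltnW].
move=> nH; rewrite /lik; apply: (prod2_step (u:=b u) (v:=b v)) => //.
- move=> i j ij Hne.
  have E : ecount ([set u; v] |: H) [ffun x => b x] i j = ecount H [ffun x => b x] i j.
    rewrite ecountU1 //.
    case: existsP => [[x /existsP [y /and4P [/eqP E xy fx fy]]]|] //.
    exfalso; rewrite !ffunE in fx fy; move: Hne.
    case: (set2_eq uv (esym E)) => [[xu yv]|[xv yu]].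
      by rewrite -(eqP fx) -(eqP fy) xu yv !eqxx.
    have bij : b u = b v.
      apply/val_inj/eqP; rewrite eqn_leq buv /=.
      by rewrite -(eqP fx) -(eqP fy) xv yu in ij.
    by rewrite -(eqP fx) -(eqP fy) xv yu bij !eqxx.
  by rewrite /ccount E.
- set E := ecount H [ffun x => b x] (b u) (b v).
  have E1 : ecount ([set u; v] |: H) [ffun x => b x] (b u) (b v) = E.+1.
    rewrite ecountU1 // (_ : [exists _, _] = true) //.
    by apply/existsP; exists u; apply/existsP; exists v; rewrite !ffunE uv !eqxx.
  have Hb := ecount_bound ([set u; v] |: H) [ffun x => b x] (b u) (b v).
  have SE i : [set x | [ffun x => b x] x == i] = [set x | b x == i].
    by apply/setP => x; rewrite !inE ffunE.
  rewrite !SE E1 in Hb.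
  rewrite /ccount E1 -/E /bsize.
  set a := Lam (b u) (b v); set c := (1 - a).
  move: Hb; case: (b u == b v) => Hb; rewrite -(subnSK Hb) !exprS;
  move: (a ^+ E) (c ^+ _) => X Y.
  all: by rewrite [RHS]mulrC mulrA [c * Y]mulrC mulrA.
Qed.

Lemma stepA (V : finType) (K : nat) (R : realFieldType) (b : V -> 'I_K) (Lam : 'M[R]_K)
  (Lsym : forall i j, Lam i j = Lam j i) (Llt1 : forall i j, Lam i j < 1)
  (H : {set {set V}}) : is_graph H ->
  lik b Lam set0 [ffun x => b x] * sbm_prob b Lam H =
  sbm_prob b Lam set0 * lik b Lam H [ffun x => b x].
Proof.
move Hn: #|H| => n; elim: n H Hn => [|n IH] H Hn HG.
  by move/eqP: Hn; rewrite cards_eq0 => /eqP ->; rewrite mulrC.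
have [e eH] : exists e, e \in H by apply/set0Pn; rewrite -card_gt0 Hn.
have /cards2P [u [v [uv Ee]]] := forall_inP HG e eH.
set H' := H :\ e.
have HH : H = e |: H' by rewrite setD1K.
have nH' : e \notin H' by rewrite setD11.
have gH' : is_graph H'.
  by apply/forall_inP => f; rewrite inE => /andP [_ fH]; exact: forall_inP HG f fH.
have cH' : #|H'| = n by have := cardsD1 e H; rewrite eH Hn => -[].
have IH' := IH H' cH' gH'.
rewrite Ee in nH' HH.
have Ps := P_step b Lsym uv nH'.
have Ls := lik_step b Lsym uv nH'.
have ne : 1 - Lam (b u) (b v) != 0.
  rewrite subr_eq0; apply/eqP => E; have := Llt1 (b u) (b v); by rewrite -E ltxx.
apply: (mulIf ne); rewrite HH.
by rewrite -mulrA Ps mulrA IH' -mulrA -Ls mulrA.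
Qed.


Definition fixS (V : finType) (S : {set V}) (s : {perm V}) : bool := [forall x in S, s x == x].

Lemma stepB (V : finType) (K : nat) (R : realFieldType) (b : V -> 'I_K) (S : {set V})
  (h : {ffun V -> 'I_K} -> R) :
  \sum_(s | fixS S s) h [ffun x => b (s x)] =
  (\sum_(s | fixS S s && ([ffun x => b (s x)] == [ffun x => b x])) 1) *
  \sum_(phi | admissible b S phi) h phi.
Proof.
rewrite (partition_big (fun s : {perm V} => [ffun x => b (s x)]) (admissible b S)).
  rewrite mulr_sumr; apply: eq_bigr => phi Hphi.
  have [s0 [fix0 b0]] := perm_fix Hphi.
  rewrite (eq_bigr (fun _ => 1 * h phi)); last by move=> s /andP [_ /eqP ->]; rewrite mul1r.
  rewrite -big_distrl /=; congr (_ * _).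
  rewrite (reindex_inj (mulgI s0)) /=; apply: eq_bigl => t.
  congr andb.
    apply/forall_inP/forall_inP => Hf x xS; have := Hf x xS; by rewrite permM fix0.
  apply/eqP/eqP => E; apply/ffunP => x; move/ffunP: E.
    by move=> /(_ (s0^-1 x)%g); rewrite !ffunE permM permKV -b0 permKV.
  by rewrite !ffunE permM => /(_ (s0 x)); rewrite !ffunE => ->; exact: b0.
move=> s Hs; apply/andP; split.
  by apply/forall_inP => x xS; rewrite ffunE (eqP (forall_inP Hs x xS)).
apply/forallP => i; rewrite /bsize -[X in _ == X](card_preimset _ (@perm_inj _ s)).
by apply/eqP; apply: eq_card => x; rewrite !inE ffunE.
Qed.


Lemma gfun (V : finType) (K : nat) (R : realFieldType) (b : V -> 'I_K) (Lam : 'M[R]_K)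
  (Lsym : forall i j, Lam i j = Lam j i)
  (Lpos : forall i j, 0 < Lam i j) (Llt1 : forall i j, Lam i j < 1)
  (S : {set V}) (o : 'I_K) (G : {set {set V}}) : is_graph G ->
  exists2 kappa : R, 0 <= kappa & forall v,
    \sum_(s | fixS S s) sbm_prob b Lam (gmap s G) * ((b (s v) == o)%:R) =
    kappa * Qpost b o Lam S G v.
Proof.
move=> HG.
set lik0 := lik b Lam set0 [ffun x => b x].
set P0 := sbm_prob b Lam set0.
set M := \sum_(s | fixS S s && ([ffun x => b (s x)] == [ffun x => b x])) (1 : R).
set Z := \sum_(phi | admissible b S phi) lik b Lam G phi.
have likpos : forall H phi, 0 < lik b Lam H phi.
  move=> H phi; rewrite /lik; apply: prodr_gt0 => i _; apply: prodr_gt0 => j _.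
  by apply: mulr_gt0; apply: exprn_gt0 => //; rewrite subr_gt0.
have P0ge : 0 <= P0.
  apply: prodr_ge0 => x _; apply: prodr_ge0 => y _.
  by case: ifP => _; [exact: ltW | rewrite subr_ge0 ltW].
have Mge : 0 <= M by apply: sumr_ge0.
have admb : admissible b S [ffun x => b x].
  apply/andP; split; first by apply/forall_inP => x _; rewrite ffunE.
  by apply/forallP => i; rewrite /bsize; apply/eqP; apply: eq_card => x; rewrite !inE ffunE.
have Zpos : 0 < Z.
  rewrite /Z (bigD1 [ffun x => b x]) //=; apply: ltr_wpDr; last exact: likpos.
  by apply: sumr_ge0 => ? _; exact: ltW.
have l0 : lik0 != 0 by apply: lt0r_neq0; exact: likpos.
exists (P0 * M * Z / lik0).
  apply: divr_ge0; last exact: ltW (likpos _ _).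
  by apply: mulr_ge0; [exact: mulr_ge0 | exact: ltW].
move=> v.
apply: (mulfI l0).
rewrite mulr_sumr.
rewrite (eq_bigr (fun s : {perm V} => P0 * (lik b Lam G [ffun x => b (s x)] *
           (([ffun x => b (s x)] v == o)%:R)))); last first.
  move=> s _; rewrite [LHS]mulrA /lik0 stepA //; last exact: graph_gmap.
  have -> : lik b Lam (gmap s G) [ffun x => b x] = lik b Lam G [ffun x => b (s x)].
    by rewrite -lik_gmap; congr lik; apply/ffunP => x; rewrite !ffunE.
  by rewrite ffunE -mulrA.
rewrite -mulr_sumr (stepB b S (fun phi => lik b Lam G phi * ((phi v == o)%:R))) -/M.
have num : \sum_(phi | admissible b S phi) lik b Lam G phi * ((phi v == o)%:R) =
           Z * Qpost b o Lam S G v.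
  rewrite /Qpost -/Z mulrC divfK ?(lt0r_neq0 Zpos) //.
  rewrite [RHS]big_mkcondr /=; apply: eq_bigr => phi _.
  by case: (phi v == o); rewrite ?mulr1 ?mulr0.
rewrite num.
by rewrite [RHS]mulrA [lik0 * _]mulrC divfK // !mulrA.
Qed.


Lemma count_natr (T : Type) (R : realFieldType) (p : pred T) (s : seq T) :
  (count p s)%:R = \sum_(v <- s) ((p v)%:R : R).
Proof.
elim: s => [|x s IH]; first by rewrite big_nil.
by rewrite big_cons /= natrD IH.
Qed.

Lemma swap_sums (I : finType) (R : realFieldType) (P : pred I) (w : I -> R)
  (c : I -> nat -> R) (a : R) (m n : nat) :
  \sum_(s | P s) w s * (a * \sum_(m <= j < n) c s j / j%:R) =
  a * \sum_(m <= j < n) (\sum_(s | P s) w s * c s j) / j%:R.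
Proof.
transitivity (\sum_(s | P s) \sum_(m <= j < n) a * (w s * c s j / j%:R)).
  apply: eq_bigr => s _; rewrite !mulr_sumr; apply: eq_bigr => j _.
  by rewrite !mulrA [w s * a]mulrC.
rewrite exchange_big mulr_sumr; apply: eq_bigr => j _.
by rewrite mulr_suml mulr_sumr.
Qed.

Unset Implicit Arguments.

Theorem theorem1 (R : realFieldType) (V : finType) (K : nat) (hK : (0 < K)%N)
  (b : V -> 'I_K) (Lam : 'M[R]_K)
  (Lam_sym : forall i j, Lam i j = Lam j i)
  (Lam_pos : forall i j, 0 < Lam i j) (Lam_lt1 : forall i j, Lam i j < 1)
  (S : {set V})
  (hA : (1 <= bsize b (Ordinal hK) - #|S :&: [set v | b v == Ordinal hK]|)%N)
  (LC : {set {set V}} -> seq V)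
  (hLC : is_canonical_scheme b (Ordinal hK) Lam S LC)
  (L : {set {set V}} -> seq V) (hL : is_VN_scheme S L) :
  MAP b (Ordinal hK) Lam S L <= MAP b (Ordinal hK) Lam S LC.
Proof.
set o := Ordinal hK.
set N := (bsize b o - #|S :&: [set v | b v == o]|)%N.
pose F := fun l : seq V => (N%:R^-1 * \sum_(1 <= j < N.+1)
    (count (fun v => b v == o) (take j l))%:R / j%:R : R).
have MAPE : forall L0, MAP b o Lam S L0 =
    \sum_(G | is_graph G) sbm_prob b Lam G * F (L0 G) by [].
have key : forall L0, MAP b o Lam S L0 * (\sum_(s | fixS S s) 1) =
   \sum_(G | is_graph G) \sum_(s | fixS S s) sbm_prob b Lam (gmap s G) * F (L0 (gmap s G)).
  move=> L0; rewrite mulrC mulr_suml.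
  transitivity (\sum_(s | fixS S s) \sum_(G | is_graph G)
                  sbm_prob b Lam (gmap s G) * F (L0 (gmap s G))).
    apply: eq_bigr => s _; rewrite mul1r MAPE (reindex_inj (@gmap_inj V s)) /=.
    by apply: eq_bigl => G; exact: graph_gmapE.
  exact: exchange_big.
have pos : 0 < \sum_(s | fixS S s) (1 : R).
  rewrite (bigD1 1%g) /=; last by apply/forall_inP => x _; rewrite perm1.
  by apply: ltr_wpDr; [apply: sumr_ge0 | exact: ltr01].
rewrite -(ler_pM2r pos) !key; apply: ler_sum => G HG.
case: (boolP (asymmetric G)) => aG; last first.
  apply: ler_sum => s _.
  have nA : ~~ asymmetric (gmap s G) by rewrite asym_gmapE.
  by rewrite (hL.1 _ (graph_gmap s HG) nA) (hLC.1.1 _ (graph_gmap s HG) nA).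
have fixP : forall s, fixS S s -> forall x, x \in S -> s x = x.
  by move=> s /forall_inP H x xS; apply/eqP; apply: H.
have mapL : forall L0, is_VN_scheme S L0 -> forall s, fixS S s ->
    L0 (gmap s G) = map s (L0 G).
  move=> L0 HL0 s Hs; symmetry; apply: HL0.2.2 => //.
  - exact: graph_gmap.
  - by rewrite asym_gmapE.
  - exact: iso_gmap.
  - exact: fixP.
rewrite (eq_bigr (fun s => sbm_prob b Lam (gmap s G) * F (map s (L G))));
  last by move=> s Hs; rewrite (mapL _ hL).
rewrite [X in _ <= X](eq_bigr (fun s => sbm_prob b Lam (gmap s G) * F (map s (LC G))));
  last by move=> s Hs; rewrite (mapL _ hLC.1).
rewrite /F !swap_sums.
apply: ler_wpM2l; first by rewrite invr_ge0 ler0n.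
apply: ler_sum => j _; apply: ler_wpM2r; first by rewrite invr_ge0 ler0n.
have cnt : forall l (s : {perm V}), (count (fun v => b v == o) (take j (map s l)))%:R =
    \sum_(v <- take j l) ((b (s v) == o)%:R : R).
  by move=> l s; rewrite -map_take count_map count_natr.
have ex : forall l, \sum_(s | fixS S s) sbm_prob b Lam (gmap s G) *
      (count (fun v => b v == o) (take j (map s l)))%:R =
    \sum_(v <- take j l) \sum_(s | fixS S s) sbm_prob b Lam (gmap s G) * (b (s v) == o)%:R.
  move=> l; rewrite (eq_bigr (fun s => \sum_(v <- take j l)
      sbm_prob b Lam (gmap s G) * (b (s v) == o)%:R)); last first.
    by move=> s _; rewrite cnt mulr_sumr.
  exact: exchange_big.
rewrite !ex.
have [kappa k0 Hk] := gfun b Lam_sym Lam_pos Lam_lt1 S o HG.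
rewrite !(eq_bigr _ (fun v _ => Hk v)) -!mulr_sumr.
apply: ler_wpM2l => //.
apply: topB; first exact: hLC.2 G HG aG.
have p1 := hL.2.1 G HG aG; have p2 := hLC.1.2.1 G HG aG.
by rewrite (perm_trans p1) // perm_sym.
Qed.
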